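(* Let $k$ be a non-negative integer. Suppose that $\ell(n)\le 2kn+n-k^2-k$ for every positive integer $n$. Then for every positive integer $n$, every Latin square of order $n$ has a partial transversal of length $n-k$.
   Context: An array of order $n$ is an $n\times n$ array with a symbol in each cell; an entry is a triple $(i,j,A_{ij})$ where $A_{ij}$ is the symbol in cell $(i,j)$. A partial transversal of length $k$ is a set of $k$ entries, no two of which agree in any of their three coordinates (row, column, symbol). A transversal of an $n\times n$ array is a partial transversal of length $n$. An array is Latin if no symbol appears more than once in any row or any column; a Latin square of order $n$ is an $n\times n$ Latin array with exactly $n$ distinct symbols. For each positive integer $n$, $\ell(n)$ denotes the least positive integer such that $\ell(n)\ge n$ and every $n\times n$ Latin array with at least $\ell(n)$ distinct symbols contains a transversal. *)

(* Defs.v *)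
From HB Require Import structures.
From mathcomp Require Import all_boot all_order all_algebra.
Set Implicit Arguments. Unset Strict Implicit. Unset Printing Implicit Defensive.

(* An array of order n: cell (i,j) holds symbol A i j; symbols are naturals
   (any countable supply of symbols is w.l.o.g. since at most n^2 occur). *)
Definition array (n : nat) := 'I_n -> 'I_n -> nat.

Definition symbols n (A : array n) : seq nat :=
  undup [seq A i j | i <- enum 'I_n, j <- enum 'I_n].

Definition nsymbols n (A : array n) : nat := size (symbols A).

Definition is_latin n (A : array n) : Prop :=
  (forall i j j', A i j = A i j' -> j = j') /\
  (forall i i' j, A i j = A i' j -> i = i').

Definition latin_square n (A : array n) : Prop :=
  is_latin A /\ nsymbols A = n.

(* A set of entries, represented by their cells (the entry of cell (i,j) is
   (i,j,A i j)); no two distinct entries agree in row, column, or symbol. *)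
Definition partial_transversal n (A : array n) (S : {set 'I_n * 'I_n}) : Prop :=
  forall e f, e \in S -> f \in S -> e != f ->
    [/\ e.1 != f.1, e.2 != f.2 & A e.1 e.2 != A f.1 f.2].

Definition has_partial_transversal n (A : array n) (len : nat) : Prop :=
  exists S : {set 'I_n * 'I_n}, #|S| = len /\ partial_transversal A S.

Definition has_transversal n (A : array n) : Prop :=
  has_partial_transversal A n.

Definition ell_cond (n m : nat) : Prop :=
  n <= m /\ forall A : array n, is_latin A -> m <= nsymbols A -> has_transversal A.

Definition is_ell (n l : nat) : Prop :=
  0 < l /\ ell_cond n l /\ forall m, 0 < m -> ell_cond n m -> l <= m.

(* Main.v *)
Require Import Defs.
From HB Require Import structures.
From mathcomp Require Import all_boot all_order all_algebra.
From mathcomp Require Import zify.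
From Stdlib Require Import Classical.
Import GRing.Theory Num.Theory.

Lemma least_ex (P : nat -> Prop) m : P m ->
  exists l, P l /\ forall m', P m' -> l <= m'.
Proof.
elim: m {-2}m (leqnn m) => [|m IH] m0 Hm0 Pm0.
  exists m0; split=> // m' _; rewrite leqn0 in Hm0; by rewrite (eqP Hm0).
case: (classic (exists m', m' < m0 /\ P m')) => [[m' [lt Pm']]|nex].
  apply: (IH m') => //; lia.
exists m0; split=> // m' Pm'; rewrite leqNgt; apply/negP => lt; apply: nex; by exists m'.
Qed.

Lemma nsymbols_le N (C : array N) : nsymbols C <= N * N.
Proof.
rewrite /nsymbols /symbols; apply: leq_trans (size_undup _) _.
by rewrite size_allpairs size_enum_ord.
Qed.

Lemma ell_exists N : exists l, is_ell N l.
Proof.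
have P0 : 0 < (N * N).+1 /\ ell_cond N (N * N).+1.
  split=> //; split; first by case: N => // N; nia.
  move=> C _ H; have := nsymbols_le _ C; lia.
have [l [[Pl1 Pl2] Hl]] := least_ex (fun m => 0 < m /\ ell_cond N m) _ P0.
exists l; split=> //; split=> // m m0 cm; exact: Hl.
Qed.

Lemma enc_inj N (a b c d : 'I_N) : a * N + b = c * N + d -> a = c /\ b = d.
Proof.
move=> E.
have N0 : 0 < N by case: N a {b c d E} => [[]|].
have E1 := congr1 (divn^~ N) E; have E2 := congr1 (modn^~ N) E.
rewrite /= !divnMDl // !divn_small // !addn0 in E1.
rewrite /= !modnMDl !modn_small // in E2.
by split; apply: val_inj.
Qed.

Lemma split_cases m n (x : 'I_(m + n)) :
  (exists x', x = lshift n x' /\ split x = inl x') \/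
  (exists y, x = rshift m y /\ split x = inr y).
Proof.
case E: (split x) => [x'|y].
  by left; exists x'; split=> //; rewrite -(splitK x) E.
by right; exists y; split=> //; rewrite -(splitK x) E.
Qed.

Theorem proposition1 (k : nat) :
  (forall n l : nat, 0 < n -> is_ell n l ->
     (l%:Z <= (2 * k * n + n)%:Z - (k ^ 2)%:Z - k%:Z)%R) ->
  forall n : nat, 0 < n ->
  forall A : array n, latin_square A -> has_partial_transversal A (n - k).
Proof.
move=> Hell n n0 A [[Lr Lc] nsA].
pose M := (\max_(i : 'I_n) \max_(j : 'I_n) A i j).+1.
have AM : forall i j, A i j < M.
  move=> i j; rewrite ltnS; apply: leq_trans (leq_bigmax (F := fun i => \max_(j : 'I_n) A i j) i).
  exact: (leq_bigmax (F := fun j => A i j) j).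
pose g (c : 'I_(n + k) * 'I_(n + k)) := M + (c.1 * (n + k) + c.2).
have gM : forall c, M <= g c by move=> c; rewrite /g leq_addr.
have ginj : injective g.
  move=> [a b] [c d] /addnI /= /enc_inj [-> ->] //.
pose B : array (n + k) := fun i j =>
  match split i, split j with inl i', inl j' => A i' j' | _, _ => g (i, j) end.
have sl : forall i : 'I_n, split (lshift k i) = inl i := fun i => unsplitK (inl i).
have Bcases : forall i j, (exists i' j', [/\ i = lshift k i', j = lshift k j' & B i j = A i' j'])
    \/ B i j = g (i, j).
  move=> i j; case: (split_cases n k i) => [[i' [-> Ei]]|[i' [-> Ei]]];
  case: (split_cases n k j) => [[j' [-> Ej]]|[j' [-> Ej]]]; rewrite /B ?Ei ?Ej.
  all: try by right.
  by left; exists i', j'.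
have BL : forall i j, B (lshift k i) (lshift k j) = A i j by move=> i j; rewrite /B !sl.
have latB : is_latin B.
  split.
  - move=> i j j' E.
    case: (Bcases i j) => [[i1 [j1 [Ei Ej Eb]]]|Eb1];
    case: (Bcases i j') => [[i2 [j2 [Ei2 Ej2 Eb2]]]|Eb2].
    + rewrite Ei in Ei2; have ii := lshift_inj Ei2; subst i2.
      rewrite Eb Eb2 in E; by rewrite Ej Ej2 (Lr _ _ _ E).
    + have := AM i1 j1; have := gM (i, j'); rewrite -Eb -Eb2 E; lia.
    + have := AM i2 j2; have := gM (i, j); rewrite -Eb1 -Eb2 E; lia.
    + rewrite Eb1 Eb2 in E; have := ginj _ _ E; by case.
  - move=> i i' j E.
    case: (Bcases i j) => [[i1 [j1 [Ei Ej Eb]]]|Eb1];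
    case: (Bcases i' j) => [[i2 [j2 [Ei2 Ej2 Eb2]]]|Eb2].
    + rewrite Ej in Ej2; have jj := lshift_inj Ej2; subst j2.
      rewrite Eb Eb2 in E; by rewrite Ei Ei2 (Lc _ _ _ E).
    + have := AM i1 j1; have := gM (i', j); rewrite -Eb -Eb2 E; lia.
    + have := AM i2 j2; have := gM (i, j); rewrite -Eb1 -Eb2 E; lia.
    + rewrite Eb1 Eb2 in E; have := ginj _ _ E; by case.
pose hmap (c : 'I_n * 'I_n) : 'I_(n + k) * 'I_(n + k) := (lshift k c.1, lshift k c.2).
have hinj : injective hmap.
  by move=> [a b] [c d] [/val_inj -> /val_inj ->].
pose In := hmap @: [set: 'I_n * 'I_n].
have cIn : #|In| = n * n by rewrite card_imset // cardsT card_prod card_ord.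
pose Out := ~: In.
have cOut : #|Out| = (n + k) * (n + k) - n * n.
  by rewrite cardsCs setCK cIn card_prod card_ord.
have BOut : forall c, c \in Out -> B c.1 c.2 = g c.
  move=> [i j]; rewrite inE => nIn /=.
  case: (Bcases i j) => [[i1 [j1 [Ei Ej Eb]]]|//].
  exfalso; move/negP: nIn; apply; apply/imsetP; exists (i1, j1) => //.
  by rewrite /hmap Ei Ej.
have symA : forall x, x \in symbols A -> x < M.
  move=> x; rewrite mem_undup => /allpairsP [[i j] [_ _ ->]]; exact: AM.
pose s1 := symbols A ++ [seq g c | c <- enum Out].
have us1 : uniq s1.
  rewrite cat_uniq undup_uniq /=; apply/andP; split.
    apply/hasPn => x /mapP [c _ ->]; apply/negP => /symA; have := gM c; lia.
  rewrite map_inj_in_uniq ?enum_uniq //; move=> c d _ _; exact: ginj.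
have ss1 : {subset s1 <= symbols B}.
  move=> x; rewrite mem_cat => /orP [|/mapP [c]].
    rewrite mem_undup => /allpairsP [[i j] [_ _ ->]] /=.
    rewrite -BL mem_undup; apply: allpairs_f; exact: mem_enum.
  rewrite mem_enum => cO ->; rewrite -BOut // mem_undup; apply: allpairs_f; exact: mem_enum.
have nsB : n + ((n + k) * (n + k) - n * n) <= nsymbols B.
  have := uniq_leq_size us1 ss1; rewrite size_cat size_map -cardE cOut.
  by rewrite /nsymbols in nsA; rewrite nsA.
have [l ell] := ell_exists (n + k).
have Hl := Hell (n + k) l ltac:(lia) ell.
have Hl' : (l + k ^ 2 + k <= 2 * k * (n + k) + (n + k))%N by lia.
case: ell => [_ [[_ Hc] _]].
have lB : l <= nsymbols B by apply: leq_trans nsB; nia.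
have [T [cT PT]] := Hc B latB lB.
pose S' := [set c | hmap c \in T].
have eS : hmap @: S' = T :&: In.
  apply/setP => x; rewrite inE; apply/imsetP/andP.
    move=> [c]; rewrite inE => cT' ->; split=> //; apply/imsetP; by exists c.
  move=> [xT /imsetP [c _ Ex]]; exists c => //; by rewrite inE -Ex.
have cS' : #|S'| = #|T :&: In| by rewrite -eS card_imset.
pose R := [set c in T | n <= c.1].
pose C := [set c in T | n <= c.2].
have sub : T :\: In \subset R :|: C.
  apply/subsetP => [[i j]]; rewrite !inE => /andP [nIn iT].
  rewrite iT /=; case: (ltnP i n) => [ilt|//]; case: (ltnP j n) => [jlt|//].
  exfalso; move/negP: nIn; apply; apply/imsetP.
  exists (Ordinal ilt, Ordinal jlt) => //; rewrite /hmap /=; congr pair; exact: val_inj.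
have bigI : forall (D : {set 'I_(n + k)}), (forall i, i \in D -> n <= i) -> #|D| <= k.
  move=> D HD.
  have ck : #|[set rshift n j | j in [set: 'I_k]]| <= k.
    by rewrite card_imset ?cardsT ?card_ord //; exact: rshift_inj.
  apply: leq_trans ck.
  apply: subset_leq_card; apply/subsetP => i /HD ni; apply/imsetP.
  have lt : i - n < k by have := ltn_ord i; lia.
  exists (Ordinal lt) => //; apply: val_inj => /=; lia.
have cR : #|R| <= k.
  have -> : #|R| = #|[set c.1 | c in R]|.
    rewrite card_in_imset // => c d; rewrite !inE => /andP [cT' _] /andP [dT _] E.
    apply/eqP; apply/negP => /negP ne; have [h _ _] := PT c d cT' dT ne.
    by rewrite E eqxx in h.
  apply: bigI => i /imsetP [c]; rewrite inE => /andP [_ h] ->; exact: h.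
have cC : #|C| <= k.
  have -> : #|C| = #|[set c.2 | c in C]|.
    rewrite card_in_imset // => c d; rewrite !inE => /andP [cT' _] /andP [dT _] E.
    apply/eqP; apply/negP => /negP ne; have [_ h _] := PT c d cT' dT ne.
    by rewrite E eqxx in h.
  apply: bigI => i /imsetP [c]; rewrite inE => /andP [_ h] ->; exact: h.
have cD : #|T :\: In| <= k + k.
  apply: leq_trans (subset_leq_card sub) _; rewrite cardsU.
  apply: leq_trans (leq_subr _ _) _; exact: leq_add.
have := cardsID In T; rewrite -cS' cT => cS.
have PTS : partial_transversal A S'.
  move=> e f; rewrite !inE => eT fT ne.
  have ne' : hmap e != hmap f by apply: contra ne => /eqP /hinj ->.
  have [h1 h2 h3] := PT _ _ eT fT ne'.
  split.
  - by apply: contra h1 => /eqP /= ->.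
  - by apply: contra h2 => /eqP /= ->.
  - by rewrite /= !BL in h3.
pose S2 := [set x in take (n - k) (enum S')].
exists S2; split.
  have /card_uniqP cu : uniq (take (n - k) (enum S')) by exact/take_uniq/enum_uniq.
  rewrite cardsE cu.
  have hs : n - k <= size (enum S') by rewrite -cardE; set t := #|T :\: In| in cS cD; set u := #|S'| in cS *; lia.
  by rewrite size_takel.
move=> e f; rewrite !inE => /mem_take; rewrite mem_enum => eS' /mem_take.
rewrite mem_enum => fS'; exact: PTS.
Qed.
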